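(* Let $v\ge w\ge 3$ and let $(\mathcal{X},\mathcal{B})$ be a $2$-IPPS$(w,v)$. If there exist two distinct blocks $A,B\in\mathcal{B}$ with $|A\cap B|=w-1$, then $|\mathcal{B}|\le v-w+1$.
   Context: A $(w,v)$ set system is a pair $(\mathcal{X},\mathcal{B})$ with $|\mathcal{X}|=v$ and $\mathcal{B}$ a family of $w$-element subsets (blocks) of $\mathcal{X}$. For a $w$-subset $T\subseteq\mathcal{X}$ let $P_t(T)=\{\mathcal{P}\subseteq\mathcal{B}: |\mathcal{P}|\le t,\ T\subseteq\bigcup_{B\in\mathcal{P}}B\}$. The set system is a $t$-IPPS$(w,v)$ if for every $w$-subset $T\subseteq\mathcal{X}$, either $P_t(T)=\emptyset$ or $\bigcap_{\mathcal{P}\in P_t(T)}\mathcal{P}\neq\emptyset$. *)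

(* Defs.v *)
From mathcomp Require Import all_boot.
Set Implicit Arguments. Unset Strict Implicit. Unset Printing Implicit Defensive.

Definition set_system (X : finType) (w v : nat) (B : {set {set X}}) : Prop :=
  #|X| = v /\ (forall b, b \in B -> #|b| = w).

Definition Pt (X : finType) (B : {set {set X}}) (t : nat) (T : {set X})
  : {set {set {set X}}} :=
  [set P in powerset B | (#|P| <= t) && (T \subset cover P)].

Definition IPPS (X : finType) (t w v : nat) (B : {set {set X}}) : Prop :=
  set_system w v B /\
  forall T : {set X}, #|T| = w ->
    Pt B t T = set0 \/ \bigcap_(P in Pt B t T) P != set0.

(* Main.v *)
Require Import Defs.
From mathcomp Require Import all_boot.
From mathcomp Require Import zify.

Lemma inPt2 (X : finType) (B : {set {set X}}) (T A E : {set X}) :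
  A \in B -> E \in B -> T \subset A :|: E -> [set A; E] \in Pt B 2 T.
Proof.
move=> hA hE hT; rewrite inE; apply/andP; split.
  rewrite powersetE; apply/subsetP => Q; rewrite !inE => /orP[]/eqP->//.
rewrite cards2; apply/andP; split; first by case: (A != E).
apply/subsetP => x /(subsetP hT); rewrite inE => /orP[] hx; apply/bigcupP.
  by exists A; rewrite ?inE ?eqxx.
by exists E; rewrite ?inE ?eqxx ?orbT.
Qed.

Lemma common (X : finType) (w v : nat) (B : {set {set X}}) (T : {set X}) P :
  IPPS 2 w v B -> #|T| = w -> P \in Pt B 2 T ->
  exists Q, forall P', P' \in Pt B 2 T -> Q \in P'.
Proof.
move=> [_ H] hT hP; case: (H T hT) => [E|/set0Pn [Q /bigcapP hQ]].
  by rewrite E inE in hP.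
by exists Q.
Qed.

Arguments common {X w v B T P}.

Theorem proposition2 (X : finType) (w v : nat) (B : {set {set X}}) :
  3 <= w -> w <= v ->
  IPPS 2 w v B ->
  (exists A C, [/\ A \in B, C \in B, A != C & #|A :&: C| = w.-1]) ->
  #|B| <= v - w + 1.
Proof.
move=> w3 wv HI [A [C [hA hC hAC hI]]].
have [[hX hw] _] := HI.
set U := A :|: C.
have cU : #|U| = w.+1.
  have := cardsUI A C; rewrite -/U hI (hw _ hA) (hw _ hC); lia.
have key1 : forall y E E', y \notin U -> E \in B -> E' \in B -> y \in E -> y \in E' -> E = E'.
  move=> y E E' yU hE hE' yE yE'.
  have yA : y \notin A by apply: contra yU; rewrite inE => ->.
  have yC : y \notin C by apply: contra yU; rewrite inE => ->; rewrite orbT.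
  set T := y |: (A :&: C).
  have cT : #|T| = w.
    rewrite cardsU1 hI inE (negbTE yA) /=; lia.
  have P1 := @inPt2 _ B T A E hA hE.
  have P2 := @inPt2 _ B T A E' hA hE'.
  have P3 := @inPt2 _ B T C E hC hE.
  have s1 : T \subset A :|: E.
    apply/subsetP => x; rewrite !inE => /orP[/eqP->|/andP[->//]]; by rewrite yE orbT.
  have s2 : T \subset A :|: E'.
    apply/subsetP => x; rewrite !inE => /orP[/eqP->|/andP[->//]]; by rewrite yE' orbT.
  have s3 : T \subset C :|: E.
    apply/subsetP => x; rewrite !inE => /orP[/eqP->|/andP[_ ->//]]; by rewrite yE orbT.
  have [Q hQ] := common HI cT (P1 s1).
  have q1 := hQ _ (P1 s1); have q2 := hQ _ (P2 s2); have q3 := hQ _ (P3 s3).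
  rewrite !inE in q1 q2 q3.
  case/orP: q3 => /eqP q3; subst Q.
    case/orP: q1 => /eqP q1; first by rewrite q1 eqxx in hAC.
    by rewrite q1 yE in yC.
  case/orP: q2 => /eqP q2; last by [].
  by rewrite -q2 yE in yA.
have key2 : forall D, D \in B -> D != A -> D != C -> exists y, y \in D :\: U.
  move=> D hD dA dC; case: (set0Pn (D :\: U)) => [//|h]; exfalso.
  have sD : D \subset U by rewrite -setD_eq0; apply/negPn/set0Pn.
  have P1 := @inPt2 _ B D D D hD hD.
  have P2 := @inPt2 _ B D A C hA hC sD.
  have [Q hQ] := common HI (hw _ hD) P2.
  have q1 := hQ _ (P1 (subsetUl _ _)); have q2 := hQ _ P2.
  rewrite !inE orbb in q1 q2; rewrite (eqP q1) in q2.
  by case/orP: q2 => /eqP e; [rewrite e eqxx in dA | rewrite e eqxx in dC].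
set S := B :\: [set A; C].
pose f (D : {set X}) := [pick y in D :\: U].
have fS : forall D, D \in S -> exists2 y, y \in D :\: U & f D = Some y.
  move=> D; rewrite !inE negb_or => /andP[/andP[dA dC] hD].
  have [y0 hy0] := key2 D hD dA dC.
  rewrite /f; case: pickP => [y hy|h]; first by exists y.
  by rewrite h in hy0.
have inj : {in S &, injective f}.
  move=> D D' hD hD' e.
  have [y hy fy] := fS D hD; have [y' hy' fy'] := fS D' hD'.
  rewrite fy fy' in e; case: e => e; subst y'.
  move: hy hy'; rewrite !in_setD => /andP[yU yD] /andP[_ yD'].
  have hB : forall Z, Z \in S -> Z \in B by move=> Z; rewrite inE => /andP[].
  exact: (key1 y D D' yU) (hB _ hD) (hB _ hD') yD yD'.
have c1 : #|S| <= #|~: U|.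
  rewrite -(card_in_imset inj).
  have -> : #|~: U| = #|[set Some y | y in ~: U]| by rewrite card_imset //; move=> a b [].
  apply: subset_leq_card; apply/subsetP => o /imsetP[D hD ->].
  have [y hy ->] := fS D hD; apply/imsetP; exists y => //.
  by move: hy; rewrite !inE => /andP[].
have c2 : #|B| <= #|S| + 2.
  have sub : B \subset S :|: [set A; C].
    by apply/subsetP => D hD; rewrite !inE hD andbT; case: (D == A); case: (D == C).
  have := subset_leq_card sub; have := cardsUI S [set A; C]; rewrite cards2.
  case: (A != C) => /=; lia.
have c3 := cardsC U.
have c4 : #|U| <= #|X| by apply: max_card.
rewrite hX cU in c3 c4; lia.
Qed.
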